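(* Let $\{\gamma_k\}$ and $\{\lambda_k\}$ be positive non-increasing sequences, let $r<1$, and let $\{\bar x_N\}$ be generated by the IR-IG method. Let $M_h,M$ be scalars with $|h(x)|\le M_h$ and $\|x\|\le M$ for all $x\in X$. Then for all $N\ge1$, $$f(\bar x_N)-f^*\le\Big(\sum_{k=0}^{N-1}\gamma_k^r\Big)^{-1}\Big(m\sum_{k=0}^{N-1}\gamma_k^{r+1}(C_f^2+\lambda_k^2C_h^2)+m^2C_f\sum_{k=0}^{N-1}\gamma_k^{r+1}(C_f+\lambda_kC_h)+2M_h\sum_{k=0}^{N-1}\gamma_k^r\lambda_k+2M^2\gamma_{N-1}^{r-1}\Big).$$
   Context: Standing setup: $X\subset\mathbb{R}^n$ is nonempty, compact and convex. $f_1,\dots,f_m:\mathbb{R}^n\to\mathbb{R}$ are convex (possibly nondifferentiable) functions and $f=\sum_{i=1}^m f_i$. $h:\mathbb{R}^n\to\mathbb{R}$ is strongly convex with parameter $\mu_h>0$ (possibly nondifferentiable). Let $f^*=\min_{x\in X}f(x)$. $C_f,C_h$ are constants such that $\|g\|\le C_f$ for every $g\in\partial f_i(x)$, $i=1,\dots,m$, $x\in X$, and $\|g\|\le C_h$ for every $g\in\partial h(x)$, $x\in X$. $\mathcal{P}_X$ denotes Euclidean projection onto $X$. IR-IG method: given $x_0\in X$, positive sequences $\{\gamma_k\}$, $\{\lambda_k\}$ and a constant $r<1$, for each $k\ge0$ set $x_{k,0}=x_k$; for $i=0,\dots,m-1$ pick any $g_{f_{i+1}}(x_{k,i})\in\partial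 f_{i+1}(x_{k,i})$ and $g_h(x_{k,i})\in\partial h(x_{k,i})$ and set $x_{k,i+1}=\mathcal{P}_X\big(x_{k,i}-\gamma_k\big(g_{f_{i+1}}(x_{k,i})+\tfrac{\lambda_k}{m}g_h(x_{k,i})\big)\big)$; then set $x_{k+1}=x_{k,m}$. The averaged iterates are $\bar x_N=\sum_{k=0}^{N-1}\gamma_k^r x_k\big/\sum_{k=0}^{N-1}\gamma_k^r$ for $N\ge1$. *)

(* Defs.v *)
From Stdlib Require Import Reals Lra Lia.
From Stdlib Require Vectors.Fin.
Open Scope R_scope.

Definition vec (n : nat) : Type := Fin.t n -> R.

Fixpoint fsum (n : nat) : (Fin.t n -> R) -> R :=
  match n return (Fin.t n -> R) -> R with
  | O => fun _ => 0
  | S k => fun v => v Fin.F1 + fsum k (fun i => v (Fin.FS i))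
  end.

Definition vadd {n} (x y : vec n) : vec n := fun i => x i + y i.
Definition vsub {n} (x y : vec n) : vec n := fun i => x i - y i.
Definition vscal {n} (a : R) (x : vec n) : vec n := fun i => a * x i.
Definition vzero {n} : vec n := fun _ => 0.
Definition inner {n} (x y : vec n) : R := fsum n (fun i => x i * y i).
Definition norm {n} (x : vec n) : R := sqrt (inner x x).

Fixpoint rsum (N : nat) (a : nat -> R) : R :=
  match N with O => 0 | S k => rsum k a + a k end.
Fixpoint vsum {n} (N : nat) (v : nat -> vec n) : vec n :=
  match N with O => vzero | S k => vadd (vsum k v) (v k) end.

Definition convex_set {n} (X : vec n -> Prop) : Prop :=
  forall x y t, X x -> X y -> 0 <= t <= 1 ->
    X (vadd (vscal t x) (vscal (1 - t) y)).

Definition converges_to {n} (u : nat -> vec n) (l : vec n) : Prop :=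
  forall eps, eps > 0 -> exists N, forall k, (N <= k)%nat -> norm (vsub (u k) l) < eps.

(* sequential compactness (equivalent to compactness in R^n) *)
Definition compact_set {n} (X : vec n -> Prop) : Prop :=
  forall u : nat -> vec n, (forall k, X (u k)) ->
    exists (phi : nat -> nat) (l : vec n),
      (forall k, (phi k < phi (S k))%nat) /\ X l /\ converges_to (fun k => u (phi k)) l.

Definition convex_fun {n} (f : vec n -> R) : Prop :=
  forall x y t, 0 <= t <= 1 ->
    f (vadd (vscal t x) (vscal (1 - t) y)) <= t * f x + (1 - t) * f y.

Definition strongly_convex {n} (f : vec n -> R) (mu : R) : Prop :=
  forall x y t, 0 <= t <= 1 ->
    f (vadd (vscal t x) (vscal (1 - t) y))
      <= t * f x + (1 - t) * f y - mu / 2 * t * (1 - t) * (norm (vsub x y))^2.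

Definition subgrad {n} (f : vec n -> R) (x g : vec n) : Prop :=
  forall y, f y >= f x + inner g (vsub y x).

Definition is_proj {n} (X : vec n -> Prop) (x p : vec n) : Prop :=
  X p /\ forall y, X y -> norm (vsub x p) <= norm (vsub x y).

(* Main.v *)
Require Import Defs.
From Stdlib Require Import Reals Lra Lia Psatz Classical.
From Stdlib Require Vectors.Fin.
From Stdlib Require Import FunctionalExtensionality.
Open Scope R_scope.


Lemma fsum_ext n (u v : Fin.t n -> R) : (forall i, u i = v i) -> fsum n u = fsum n v.
Proof. revert u v; induction n; simpl; intros u v H; auto. rewrite H, (IHn (fun i => u (Fin.FS i)) (fun i => v (Fin.FS i))); auto. Qed.
Lemma fsum_plus n (u v : Fin.t n -> R) : fsum n (fun i => u i + v i) = fsum n u + fsum n v.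
Proof. revert u v; induction n; simpl; intros u v; [lra|]. rewrite IHn; ring. Qed.
Lemma fsum_scal n c (u : Fin.t n -> R) : fsum n (fun i => c * u i) = c * fsum n u.
Proof. revert u; induction n; simpl; intros u; [lra|]. rewrite IHn; ring. Qed.
Lemma fsum_nonneg n (u : Fin.t n -> R) : (forall i, 0 <= u i) -> 0 <= fsum n u.
Proof. revert u; induction n; simpl; intros u H; [lra|]. assert (0 <= fsum n (fun i => u (Fin.FS i))) by (apply IHn; auto). specialize (H Fin.F1). lra. Qed.

Lemma vec_ext {n} (u v : vec n) : (forall i, u i = v i) -> u = v.
Proof. intros; apply functional_extensionality; auto. Qed.
Lemma f_ext {n} (F : vec n -> R) (u v : vec n) : (forall i, u i = v i) -> F u = F v.
Proof. intros H; rewrite (vec_ext u v H); auto. Qed.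

Lemma inner_sym {n} (a b : vec n) : inner a b = inner b a.
Proof. unfold inner; apply fsum_ext; intros; ring. Qed.
Lemma inner_add_l {n} (a b c : vec n) : inner (vadd a b) c = inner a c + inner b c.
Proof. unfold inner, vadd. rewrite <- fsum_plus; apply fsum_ext; intros; ring. Qed.
Lemma inner_sub_l {n} (a b c : vec n) : inner (vsub a b) c = inner a c - inner b c.
Proof. unfold inner, vsub. replace (fsum n (fun i => a i * c i) - fsum n (fun i => b i * c i))
 with (fsum n (fun i => a i * c i) + (-1) * fsum n (fun i => b i * c i)) by ring.
 rewrite <- fsum_scal, <- fsum_plus; apply fsum_ext; intros; ring. Qed.
Lemma inner_scal_l {n} t (a c : vec n) : inner (vscal t a) c = t * inner a c.
Proof. unfold inner, vscal. rewrite <- fsum_scal; apply fsum_ext; intros; ring. Qed.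
Lemma inner_add_r {n} (a b c : vec n) : inner c (vadd a b) = inner c a + inner c b.
Proof. rewrite !(inner_sym c); apply inner_add_l. Qed.
Lemma inner_sub_r {n} (a b c : vec n) : inner c (vsub a b) = inner c a - inner c b.
Proof. rewrite !(inner_sym c); apply inner_sub_l. Qed.
Lemma inner_scal_r {n} t (a c : vec n) : inner c (vscal t a) = t * inner c a.
Proof. rewrite !(inner_sym c); apply inner_scal_l. Qed.
Lemma inner_pos {n} (a : vec n) : 0 <= inner a a.
Proof. unfold inner; apply fsum_nonneg; intros; nra. Qed.

Lemma cs_sq n (a b : vec n) : (inner a b)^2 <= inner a a * inner b b.
Proof. unfold inner. revert a b; induction n; simpl; intros a b; [lra|].
 specialize (IHn (fun i => a (Fin.FS i)) (fun i => b (Fin.FS i))).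
 pose proof (fsum_nonneg n (fun i => a (Fin.FS i) * a (Fin.FS i)) ltac:(intros; nra)).
 pose proof (fsum_nonneg n (fun i => b (Fin.FS i) * b (Fin.FS i)) ltac:(intros; nra)).
 set (s := fsum n (fun i => a (Fin.FS i) * b (Fin.FS i))) in *.
 set (A := fsum n (fun i => a (Fin.FS i) * a (Fin.FS i))) in *.
 set (B := fsum n (fun i => b (Fin.FS i) * b (Fin.FS i))) in *.
 set (x := a Fin.F1); set (y := b Fin.F1).
 assert (2*x*y*s <= x*x*B + y*y*A).
 { assert ((x*x*B + y*y*A)^2 >= (2*x*y*s)^2).
   { assert ((x*x*B + y*y*A)^2 - (2*x*y*s)^2 = (x*x*B - y*y*A)^2 + 4*(x*y)^2*(A*B - s^2)) by ring.
     assert (0 <= (x*y)^2*(A*B-s^2)) by (apply Rmult_le_pos; nra).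
     pose proof (pow2_ge_0 (x*x*B - y*y*A)). lra. }
   assert (x*x*B + y*y*A >= 0) by (assert (0<=x*x) by nra; assert (0<=y*y) by nra; nra). nra. }
 assert ((x*y + s)^2 = x*x*(y*y) + 2*x*y*s + s^2) by ring.
 assert ((x*x+A)*(y*y+B) = x*x*(y*y) + (x*x*B + y*y*A) + A*B) by ring. nra.
Qed.

Lemma norm_sq {n} (a : vec n) : norm a ^ 2 = inner a a.
Proof. unfold norm. simpl. rewrite Rmult_1_r. apply sqrt_sqrt, inner_pos. Qed.
Lemma norm_pos {n} (a : vec n) : 0 <= norm a.
Proof. apply sqrt_pos. Qed.
Lemma cs {n} (a b : vec n) : inner a b <= norm a * norm b.
Proof. pose proof (cs_sq n a b). rewrite <- (norm_sq a), <- (norm_sq b) in H.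
 pose proof (norm_pos a); pose proof (norm_pos b).
 assert (0 <= norm a * norm b) by nra.
 destruct (Rle_dec (inner a b) (norm a * norm b)); auto.
 assert (norm a ^2 * norm b ^ 2 = (norm a * norm b)^2) by ring. nra. Qed.
Lemma norm_le_sq {n} (a b : vec n) : inner a a <= inner b b -> norm a <= norm b.
Proof. intros; apply sqrt_le_1; auto using inner_pos. Qed.
Lemma sq_le_norm {n} (a b : vec n) : norm a <= norm b -> inner a a <= inner b b.
Proof. intros; apply sqrt_le_0; auto using inner_pos. Qed.
Lemma norm_triangle {n} (a b : vec n) : norm (vadd a b) <= norm a + norm b.
Proof. assert (inner (vadd a b) (vadd a b) <= (norm a + norm b)^2).
 { rewrite inner_add_l, !inner_add_r. pose proof (cs a b). rewrite (inner_sym b a).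
   rewrite <- (norm_sq a), <- (norm_sq b). nra. }
 rewrite <- norm_sq in H. pose proof (norm_pos (vadd a b)); pose proof (norm_pos a); pose proof (norm_pos b). nra. Qed.
Lemma norm_scal {n} t (a : vec n) : norm (vscal t a) = Rabs t * norm a.
Proof. unfold norm. rewrite inner_scal_l, inner_scal_r. rewrite <- Rmult_assoc.
 rewrite sqrt_mult_alt. 2: { pose proof (Rle_0_sqr t); unfold Rsqr in *; lra. }
 f_equal. rewrite <- sqrt_Rsqr_abs. unfold Rsqr. auto. Qed.
Lemma cs_norm_le {n} (a b : vec n) C : norm a <= C -> inner a b <= C * norm b.
Proof. intros. pose proof (cs a b). pose proof (norm_pos b). nra. Qed.

Lemma conv1d (phi : R -> R) :
  (forall a b t, 0 <= t <= 1 -> phi (t*a + (1-t)*b) <= t * phi a + (1-t) * phi b) ->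
  exists c, forall b, phi b >= phi 0 + c * b.
Proof.
  intros Hc.
  set (E := fun s => exists a, a < 0 /\ s = (phi a - phi 0) / a).
  assert (Hs : forall a b, a < 0 -> 0 < b -> b * (phi a - phi 0) >= a * (phi b - phi 0)).
  { intros a b Ha Hb. set (t := b / (b - a)).
    assert (Ht : 0 <= t <= 1). { unfold t; split.
      - apply Rmult_le_pos; [lra| left; apply Rinv_0_lt_compat; lra].
      - apply (Rmult_le_reg_r (b - a)); [lra|]. unfold Rdiv; rewrite Rmult_assoc, Rinv_l; lra. }
    pose proof (Hc a b t Ht).
    assert (t * a + (1 - t) * b = 0) by (unfold t; field; lra).
    rewrite H0 in H.
    assert ((b-a) * phi 0 <= (b-a) * (t * phi a + (1 - t) * phi b)) by (apply Rmult_le_compat_l; lra).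
    replace ((b-a) * (t * phi a + (1 - t) * phi b)) with (b * phi a - a * phi b) in H1 by (unfold t; field; lra).
    lra. }
  assert (Hb : bound E).
  { exists (phi 1 - phi 0). intros s [a [Ha ->]].
    pose proof (Hs a 1 Ha ltac:(lra)).
    apply (Rmult_le_reg_r (-a)); [lra|].
    replace ((phi a - phi 0) / a * - a) with (-(phi a - phi 0)) by (field; lra). lra. }
  assert (Hne : exists s, E s) by (exists ((phi (-1) - phi 0) / (-1)); exists (-1); split; [lra|auto]).
  destruct (completeness E Hb Hne) as [c [Hup Hlub]].
  exists c. intros b.
  destruct (Rtotal_order b 0) as [Hb0|[Hb0|Hb0]].
  - assert ((phi b - phi 0) / b <= c) by (apply Hup; exists b; auto).
    assert (phi b - phi 0 = (phi b - phi 0) / b * b) by (field; lra).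
    nra.
  - subst. lra.
  - assert ((phi b - phi 0) / b >= c).
    { apply Rle_ge, Hlub. intros s [a [Ha ->]].
      pose proof (Hs a b Ha Hb0).
      apply (Rmult_le_reg_r (-a * b)); [nra|].
      replace ((phi a - phi 0) / a * (- a * b)) with (-(b * (phi a - phi 0))) by (field; lra).
      replace ((phi b - phi 0) / b * (- a * b)) with (-(a * (phi b - phi 0))) by (field; lra). lra. }
    assert (phi b - phi 0 = (phi b - phi 0) / b * b) by (field; lra).
    nra.
Qed.

Definition vcons {n} (a : R) (w : vec n) : vec (S n) := fun i => Fin.caseS' i (fun _ => R) a w.
Definition vtail {n} (y : vec (S n)) : vec n := fun j => y (Fin.FS j).

Lemma vcons_eta {n} (y : vec (S n)) (i : Fin.t (S n)) : y i = vcons (y Fin.F1) (vtail y) i.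
Proof. apply (Fin.caseS' i (fun i => y i = vcons (y Fin.F1) (vtail y) i)); reflexivity. Qed.

Lemma vcons_lin {n} t a1 a2 (w1 w2 : vec n) (i : Fin.t (S n)) :
  vadd (vscal t (vcons a1 w1)) (vscal (1-t) (vcons a2 w2)) i =
  vcons (t*a1 + (1-t)*a2) (vadd (vscal t w1) (vscal (1-t) w2)) i.
Proof. apply (Fin.caseS' i (fun i => vadd (vscal t (vcons a1 w1)) (vscal (1-t) (vcons a2 w2)) i =
  vcons (t*a1 + (1-t)*a2) (vadd (vscal t w1) (vscal (1-t) w2)) i)); reflexivity. Qed.

Lemma vcons_ext {n} a1 a2 (w1 w2 : vec n) i : a1 = a2 -> (forall j, w1 j = w2 j) -> vcons a1 w1 i = vcons a2 w2 i.
Proof. intros -> H. rewrite (vec_ext w1 w2 H). reflexivity. Qed.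

Lemma inner_vcons {n} c (g : vec n) (y : vec (S n)) : inner (vcons c g) y = c * y Fin.F1 + inner g (vtail y).
Proof. reflexivity. Qed.

Lemma sg0 n : forall f : vec n -> R, convex_fun f -> exists g, forall y, f y >= f vzero + inner g y.
Proof.
  induction n as [|n IH]; intros f Hf.
  - exists vzero. intros y. replace (f y) with (f vzero) by (apply f_ext; intro i; apply Fin.case0; exact i).
    unfold inner; simpl; lra.
  - set (phi := fun a => f (vcons a vzero)).
    assert (Hphi : forall a b t, 0 <= t <= 1 -> phi (t*a + (1-t)*b) <= t * phi a + (1-t) * phi b).
    { intros a b t Ht. unfold phi.
      replace (f (vcons (t * a + (1 - t) * b) vzero)) with
        (f (vadd (vscal t (vcons a vzero)) (vscal (1-t) (vcons b vzero)))).
      - apply Hf; auto.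
      - apply f_ext; intro i; rewrite vcons_lin. apply vcons_ext; auto.
        intro j; unfold vadd, vscal, vzero; simpl; ring. }
    destruct (conv1d phi Hphi) as [c Hc].
    set (F := fun a w => f (vcons a w) - c * a).
    assert (Hlow : forall a w, F a w >= 2 * phi 0 - f (vcons 0 (vscal (-1) w))).
    { intros b w. set (a := b/2).
      pose proof (Hf (vcons (2*a) w) (vcons 0 (vscal (-1) w)) (1/2) ltac:(lra)) as H.
      replace (vadd (vscal (1/2) (vcons (2*a) w)) (vscal (1 - 1/2) (vcons 0 (vscal (-1) w))))
        with (vcons a (@vzero n)) in H.
      2: { apply vec_ext; intro i; rewrite vcons_lin.
           replace (1/2 * (2*a) + (1 - 1/2) * 0) with a by field.
           apply vcons_ext; auto. intro j; unfold vadd, vscal, vzero; simpl; lra. }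
      fold (phi a) in H. specialize (Hc a). unfold F.
      replace (2*a) with b in H by (unfold a; field). unfold a in *. lra. }
    set (E := fun w z => exists a, z = - F a w).
    assert (Hb : forall w, bound (E w)).
    { intros w. exists (- (2 * phi 0 - f (vcons 0 (vscal (-1) w)))). intros z [a ->].
      specialize (Hlow a w). lra. }
    assert (Hne : forall w, exists z, E w z) by (intros w; exists (- F 0 w); exists 0; auto).
    set (f' := fun w => - proj1_sig (completeness (E w) (Hb w) (Hne w))).
    assert (P1 : forall a w, f' w <= F a w).
    { intros a w. unfold f'. destruct (completeness (E w) (Hb w) (Hne w)) as [mm [Hu Hl]]. simpl.
      assert (- F a w <= mm) by (apply Hu; exists a; auto). lra. }
    assert (P2 : forall w eps, eps > 0 -> exists a, F a w < f' w + eps).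
    { intros w eps He. unfold f'. destruct (completeness (E w) (Hb w) (Hne w)) as [mm [Hu Hl]]. simpl.
      apply NNPP; intro Hn.
      assert (mm <= mm - eps); [|lra].
      apply Hl. intros z [a ->]. apply Rnot_lt_le. intro Hlt. apply Hn. exists a. lra. }
    assert (Hf' : convex_fun f').
    { intros w1 w2 t Ht. apply Rnot_lt_le; intro Hlt.
      set (eps := (f' (vadd (vscal t w1) (vscal (1 - t) w2)) - (t * f' w1 + (1 - t) * f' w2)) / 2).
      assert (He : eps > 0) by (unfold eps; lra).
      destruct (P2 w1 eps He) as [a1 Ha1]. destruct (P2 w2 eps He) as [a2 Ha2].
      pose proof (P1 (t*a1 + (1-t)*a2) (vadd (vscal t w1) (vscal (1 - t) w2))) as H.
      pose proof (Hf (vcons a1 w1) (vcons a2 w2) t Ht) as H2.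
      replace (vadd (vscal t (vcons a1 w1)) (vscal (1 - t) (vcons a2 w2))) with
        (vcons (t*a1 + (1-t)*a2) (vadd (vscal t w1) (vscal (1 - t) w2))) in H2
        by (apply vec_ext; intro i; rewrite vcons_lin; auto).
      unfold F in H, Ha1, Ha2.
      assert (t * (f (vcons a1 w1) - c * a1) <= t * (f' w1 + eps)) by (apply Rmult_le_compat_l; lra).
      assert ((1-t) * (f (vcons a2 w2) - c * a2) <= (1-t) * (f' w2 + eps)) by (apply Rmult_le_compat_l; lra).
      unfold eps in *. lra. }
    assert (P0 : f' vzero >= phi 0).
    { unfold f'. destruct (completeness (E vzero) (Hb vzero) (Hne vzero)) as [mm [Hu Hl]]. simpl.
      assert (mm <= - phi 0); [|lra]. apply Hl. intros z [a ->]. unfold F. fold (phi a).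
      specialize (Hc a). lra. }
    destruct (IH f' Hf') as [g' Hg'].
    exists (vcons c g'). intros y.
    rewrite inner_vcons.
    replace (f y) with (F (y Fin.F1) (vtail y) + c * y Fin.F1)
      by (unfold F; rewrite (f_ext f y (vcons (y Fin.F1) (vtail y)) (vcons_eta y)); ring).
    replace (f vzero) with (phi 0).
    2: { unfold phi. apply f_ext. intro i. rewrite (vcons_eta (@vzero (S n)) i). reflexivity. }
    specialize (Hg' (vtail y)). specialize (P1 (y Fin.F1) (vtail y)). lra.
Qed.

Lemma subgrad_exists n (f : vec n -> R) : convex_fun f -> forall x, exists g, subgrad f x g.
Proof.
  intros Hf x. set (f1 := fun y => f (vadd x y)).
  assert (Hf1 : convex_fun f1).
  { intros a b t Ht. unfold f1.
    replace (vadd x (vadd (vscal t a) (vscal (1 - t) b))) with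
      (vadd (vscal t (vadd x a)) (vscal (1-t) (vadd x b))) by (apply vec_ext; intro i; unfold vadd, vscal; ring).
    apply Hf; auto. }
  destruct (sg0 n f1 Hf1) as [g Hg]. exists g. intros y.
  specialize (Hg (vsub y x)). unfold f1 in Hg.
  replace (vadd x (vsub y x)) with y in Hg by (apply vec_ext; intro i; unfold vadd, vsub; ring).
  replace (vadd x vzero) with x in Hg by (apply vec_ext; intro i; unfold vadd, vzero; ring).
  exact Hg.
Qed.

Lemma expand_sub {n} (a b : vec n) t :
  inner (vsub a (vscal t b)) (vsub a (vscal t b)) = inner a a - 2 * t * inner a b + t^2 * inner b b.
Proof. rewrite !inner_sub_l, !inner_sub_r, !inner_scal_l, !inner_scal_r, (inner_sym b a). ring. Qed.

Lemma proj_nonexp {n} (X : vec n -> Prop) z p y :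
  convex_set X -> is_proj X z p -> X y ->
  inner (vsub p y) (vsub p y) <= inner (vsub z y) (vsub z y).
Proof.
  intros Hc [Hp Hmin] Hy.
  set (A := vsub z p). set (B := vsub y p).
  assert (Ht : forall t, 0 < t <= 1 -> 2 * inner A B <= t * inner B B).
  { intros t Ht. set (q := vadd (vscal t y) (vscal (1-t) p)).
    assert (Xq : X q) by (apply Hc; auto; lra).
    pose proof (sq_le_norm _ _ (Hmin q Xq)) as H.
    replace (vsub z q) with (vsub A (vscal t B)) in H
      by (apply vec_ext; intro i; unfold A, B, q, vsub, vadd, vscal; ring).
    rewrite expand_sub in H. fold A in H.
    assert (t * (2 * inner A B) <= t * (t * inner B B)) by nra.
    apply Rmult_le_reg_l in H0; lra. }
  assert (HAB : inner A B <= 0).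
  { pose proof (inner_pos B). destruct (Rle_dec (inner A B) 0) as [|Hn]; auto.
    set (t := inner A B / (inner A B + inner B B)).
    assert (0 < t <= 1).
    { unfold t; split. apply Rdiv_lt_0_compat; lra.
      apply (Rmult_le_reg_r (inner A B + inner B B)); [lra|]. unfold Rdiv. rewrite Rmult_assoc, Rinv_l; lra. }
    specialize (Ht t H0).
    assert (t * inner B B <= inner A B).
    { unfold t. apply (Rmult_le_reg_r (inner A B + inner B B)); [lra|].
      replace (inner A B / (inner A B + inner B B) * inner B B * (inner A B + inner B B)) with (inner A B * inner B B) by (field; lra).
      nra. }
    lra. }
  replace (vsub z y) with (vsub A (vscal 1 B)) by (apply vec_ext; intro i; unfold A, B, vsub, vscal; ring).
  replace (vsub p y) with (vscal (-1) B) by (apply vec_ext; intro i; unfold B, vsub, vscal; ring).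
  rewrite expand_sub, inner_scal_l, inner_scal_r. pose proof (inner_pos A). lra.
Qed.

Lemma proj_dist {n} (X : vec n -> Prop) z p y :
  convex_set X -> is_proj X z p -> X y -> norm (vsub p y) <= norm (vsub z y).
Proof. intros; apply norm_le_sq; eapply proj_nonexp; eauto. Qed.

Lemma rsum_ext N a b : (forall k, (k < N)%nat -> a k = b k) -> rsum N a = rsum N b.
Proof. induction N; simpl; intros; auto. rewrite IHN, H; auto. Qed.
Lemma rsum_plus N a b : rsum N (fun k => a k + b k) = rsum N a + rsum N b.
Proof. induction N; simpl; [lra|]. rewrite IHN; ring. Qed.
Lemma rsum_scal N c a : rsum N (fun k => c * a k) = c * rsum N a.
Proof. induction N; simpl; [lra|]. rewrite IHN; ring. Qed.
Lemma rsum_le N a b : (forall k, (k < N)%nat -> a k <= b k) -> rsum N a <= rsum N b.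
Proof. induction N; simpl; intros; [lra|]. pose proof (H N ltac:(lia)). pose proof (IHN ltac:(intros; apply H; lia)). lra. Qed.
Lemma rsum_pos N a : (forall k, (k < N)%nat -> 0 < a k) -> (1 <= N)%nat -> 0 < rsum N a.
Proof. induction N; simpl; intros; [lia|]. destruct N. simpl. pose proof (H 0%nat ltac:(lia)); lra.
  pose proof (H (S N) ltac:(lia)). pose proof (IHN ltac:(intros; apply H; lia) ltac:(lia)). lra. Qed.

Lemma jensen {n} (F : vec n -> R) (w : nat -> R) (u : nat -> vec n) :
  convex_fun F -> (forall k, 0 < w k) -> forall N, (1 <= N)%nat ->
  F (vscal (/ rsum N w) (vsum N (fun k => vscal (w k) (u k)))) <= / rsum N w * rsum N (fun k => w k * F (u k)).
Proof.
  intros HF Hw N HN. induction N; [lia|].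
  destruct N.
  - simpl. replace (vscal (/ (0 + w 0%nat)) (vadd vzero (vscal (w 0%nat) (u 0%nat)))) with (u 0%nat).
    + pose proof (Hw 0%nat). right; field; lra.
    + apply vec_ext; intro i; unfold vscal, vadd, vzero. pose proof (Hw 0%nat). field; lra.
  - specialize (IHN ltac:(lia)).
    set (S0 := rsum (S N) w) in *. set (wN := w (S N)).
    assert (HS0 : 0 < S0) by (apply rsum_pos; auto; lia).
    pose proof (Hw (S N)) as HwN; fold wN in HwN.
    change (rsum (S (S N)) w) with (S0 + wN).
    change (rsum (S (S N)) (fun k => w k * F (u k))) with (rsum (S N) (fun k => w k * F (u k)) + wN * F (u (S N))).
    set (t := S0 / (S0 + wN)).
    assert (Ht : 0 <= t <= 1).
    { unfold t; split. apply Rmult_le_pos; [lra| left; apply Rinv_0_lt_compat; lra].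
      apply (Rmult_le_reg_r (S0 + wN)); [lra|]. unfold Rdiv; rewrite Rmult_assoc, Rinv_l; lra. }
    set (xb := vscal (/ S0) (vsum (S N) (fun k => vscal (w k) (u k)))) in *.
    replace (vscal (/ (S0 + wN)) (vsum (S (S N)) (fun k => vscal (w k) (u k))))
      with (vadd (vscal t xb) (vscal (1-t) (u (S N)))).
    2: { apply vec_ext; intro i. unfold xb, t. simpl vsum. unfold vscal, vadd. fold wN. field. lra. }
    eapply Rle_trans; [apply HF; auto|].
    replace (1 - t) with (wN / (S0 + wN)) by (unfold t; field; lra).
    unfold t.
    apply (Rmult_le_reg_l (S0 + wN)); [lra|].
    replace ((S0 + wN) * (S0 / (S0 + wN) * F xb + wN / (S0 + wN) * F (u (S N)))) with
      (S0 * F xb + wN * F (u (S N))) by (field; lra).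
    replace ((S0 + wN) * (/ (S0 + wN) * (rsum (S N) (fun k => w k * F (u k)) + wN * F (u (S N)))))
      with (rsum (S N) (fun k => w k * F (u k)) + wN * F (u (S N))) by (field; lra).
    assert (S0 * F xb <= rsum (S N) (fun k => w k * F (u k))).
    { apply (Rmult_le_compat_l S0) in IHN; [|lra]. rewrite <- Rmult_assoc, Rinv_r in IHN; lra. }
    lra.
Qed.

Lemma telescope (a D : nat -> R) B N : (1 <= N)%nat ->
  (forall k, 0 <= a k) -> (forall k, a k <= a (S k)) -> (forall k, 0 <= D k <= B) ->
  rsum N (fun k => a k * (D k - D (S k))) <= a (N - 1)%nat * B.
Proof.
  intros HN Ha Hinc HD.
  assert (forall N, (1 <= N)%nat -> rsum N (fun k => a k * (D k - D (S k))) <= a (N - 1)%nat * (B - D N)).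
  { intros M HM. induction M; [lia|]. destruct M.
    - simpl. pose proof (HD 0%nat). pose proof (Ha 0%nat). nra.
    - specialize (IHM ltac:(lia)). simpl rsum. simpl in IHM |- *. rewrite Nat.sub_0_r in *.
      pose proof (HD (S M)); pose proof (Hinc M); pose proof (Ha (S M)).
      assert (a M * (B - D (S M)) <= a (S M) * (B - D (S M))) by nra. nra. }
  specialize (H N HN). pose proof (HD N); pose proof (Ha (N-1)%nat). nra.
Qed.

Lemma rpow_mono g1 g2 s : 0 < g1 -> g1 <= g2 -> s < 0 -> Rpower g2 s <= Rpower g1 s.
Proof.
  intros H1 H2 Hs. replace s with (- (- s)) by ring. rewrite (Rpower_Ropp g2 (-s)), (Rpower_Ropp g1 (-s)).
  apply Rinv_le_contravar. unfold Rpower; apply exp_pos.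
  apply Rle_Rpower_l; lra.
Qed.

Lemma rpow_pos g s : 0 < Rpower g s.
Proof. unfold Rpower; apply exp_pos. Qed.

Lemma convex_rsum {n} (fs : nat -> vec n -> R) K :
  (forall i, (i < K)%nat -> convex_fun (fs i)) -> convex_fun (fun y => rsum K (fun i => fs i y)).
Proof.
  induction K; intros H x y t Ht; simpl; [lra|].
  pose proof (IHK ltac:(intros; apply H; lia) x y t Ht). simpl in H0.
  pose proof (H K ltac:(lia) x y t Ht). lra.
Qed.

Lemma inner_flip {n} (a b g : vec n) : inner (vsub a b) g = - inner g (vsub b a).
Proof. rewrite inner_sub_l, inner_sub_r, (inner_sym a g), (inner_sym b g). ring. Qed.

Lemma cs_lower {n} (g a : vec n) : - (norm g * norm a) <= inner g a.
Proof. pose proof (cs (vscal (-1) g) a). rewrite inner_scal_l, norm_scal in H.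
  assert (Rabs (-1) = 1) by (unfold Rabs; destruct Rcase_abs; lra). rewrite H0 in H. lra. Qed.

Lemma rsum_minus N a b : rsum N (fun k => a k - b k) = rsum N a - rsum N b.
Proof. induction N; simpl; [lra|]. rewrite IHN; ring. Qed.

Lemma norm_zero {n} (a : vec n) : norm (vsub a a) = 0.
Proof. replace (vsub a a) with (vscal 0 a) by (apply vec_ext; intro i; unfold vsub, vscal; ring).
  rewrite norm_scal, Rabs_R0; ring. Qed.

Lemma norm_sub_le {n} (a b : vec n) : norm (vsub a b) <= norm a + norm b.
Proof. replace (vsub a b) with (vadd a (vscal (-1) b)) by (apply vec_ext; intro i; unfold vsub, vadd, vscal; ring).
  eapply Rle_trans; [apply norm_triangle|]. rewrite norm_scal. assert (Rabs (-1) = 1) by (unfold Rabs; destruct Rcase_abs; lra). rewrite H. lra. Qed.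

Theorem lemma6
  (n m : nat) (X : vec n -> Prop) (fs : nat -> vec n -> R) (h : vec n -> R)
  (mu_h Cf Ch fstar r Mh M : R) (gamma lambda : nat -> R)
  (x : nat -> nat -> vec n) (gf gh : nat -> nat -> vec n) :
  (1 <= m)%nat ->
  (exists x0, X x0) -> convex_set X -> compact_set X ->
  (forall i, (i < m)%nat -> convex_fun (fs i)) ->
  mu_h > 0 -> strongly_convex h mu_h ->
  let f := fun y => rsum m (fun i => fs i y) in
  (exists y, X y /\ f y = fstar) -> (forall y, X y -> fstar <= f y) ->
  (forall i y g, (i < m)%nat -> X y -> subgrad (fs i) y g -> norm g <= Cf) ->
  (forall y g, X y -> subgrad h y g -> norm g <= Ch) ->
  (forall k, gamma k > 0) -> (forall k, lambda k > 0) ->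
  (forall k, gamma (S k) <= gamma k) -> (forall k, lambda (S k) <= lambda k) ->
  r < 1 ->
  X (x 0%nat 0%nat) ->
  (forall k i, (i < m)%nat ->
     subgrad (fs i) (x k i) (gf k i) /\ subgrad h (x k i) (gh k i) /\
     is_proj X
       (vsub (x k i) (vscal (gamma k)
          (vadd (gf k i) (vscal (lambda k / INR m) (gh k i)))))
       (x k (S i))) ->
  (forall k, x (S k) 0%nat = x k m) ->
  (forall y, X y -> Rabs (h y) <= Mh) ->
  (forall y, X y -> norm y <= M) ->
  forall N : nat, (1 <= N)%nat ->
  let S := rsum N (fun k => Rpower (gamma k) r) in
  let xbar := vscal (/ S) (vsum N (fun k => vscal (Rpower (gamma k) r) (x k 0%nat))) in
  f xbar - fstar <=
    / S * ( INR m * rsum N (fun k => Rpower (gamma k) (r + 1) * (Cf ^ 2 + (lambda k) ^ 2 * Ch ^ 2))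
          + (INR m) ^ 2 * Cf * rsum N (fun k => Rpower (gamma k) (r + 1) * (Cf + lambda k * Ch))
          + 2 * Mh * rsum N (fun k => Rpower (gamma k) r * lambda k)
          + 2 * M ^ 2 * Rpower (gamma (N - 1)%nat) (r - 1) ).
Proof.
  intros Hm Hx0 HXc HXk Hfs Hmu Hh f [xs [Hxs Hfxs]] Hfmin HCf HCh Hg Hl Hgd Hld Hr Hx00 Hit Hnext HMh HM N HN S xbar.
  set (mR := INR m).
  assert (HmR : 1 <= mR) by (unfold mR; replace 1 with (INR 1) by reflexivity; apply le_INR; lia).
  assert (Hhc : convex_fun h).
  { intros a b t Ht. pose proof (Hh a b t Ht). pose proof (pow2_ge_0 (norm (vsub a b))).
    assert (0 <= mu_h / 2 * t * (1 - t) * norm (vsub a b) ^ 2).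
    { apply Rmult_le_pos; [|lra]. assert (0 <= mu_h / 2) by lra. assert (0 <= t * (1-t)) by nra.
      replace (mu_h / 2 * t * (1 - t)) with ((mu_h/2) * (t * (1-t))) by ring. apply Rmult_le_pos; lra. } lra. }
  assert (HCf0 : 0 <= Cf).
  { destruct (subgrad_exists n (fs 0%nat) (Hfs 0%nat ltac:(lia)) xs) as [g0 Hg0].
    pose proof (HCf 0%nat xs g0 ltac:(lia) Hxs Hg0). pose proof (norm_pos g0). lra. }
  assert (HCh0 : 0 <= Ch).
  { destruct (subgrad_exists n h Hhc xs) as [g0 Hg0].
    pose proof (HCh xs g0 Hxs Hg0). pose proof (norm_pos g0). lra. }
  assert (HMh0 : 0 <= Mh) by (pose proof (HMh xs Hxs); pose proof (Rabs_pos (h xs)); lra).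
  assert (HX : forall k i, (i <= m)%nat -> X (x k i)).
  { intro k; induction k; intro i; induction i; intros Hi.
    - auto.
    - destruct (Hit 0%nat i ltac:(lia)) as [_ [_ [Hp _]]]; exact Hp.
    - rewrite Hnext; apply IHk; lia.
    - destruct (Hit (Datatypes.S k) i ltac:(lia)) as [_ [_ [Hp _]]]; exact Hp. }
  assert (Hlip : forall i a b, (i < m)%nat -> X a -> X b -> fs i b - fs i a <= Cf * norm (vsub a b)).
  { intros i a b Hi Ha Hb.
    destruct (subgrad_exists n (fs i) (Hfs i Hi) b) as [g Hg'].
    pose proof (Hg' a). pose proof (HCf i b g Hi Hb Hg'). pose proof (cs_lower g (vsub a b)).
    pose proof (norm_pos (vsub a b)). nra. }
  set (D := fun k => inner (vsub (x k 0%nat) xs) (vsub (x k 0%nat) xs)).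
  assert (HK : forall k, 2 * gamma k * (f (x k 0%nat) - fstar) <=
            D k - D (Datatypes.S k) + 2 * mR * gamma k ^ 2 * (Cf ^ 2 + lambda k ^ 2 * Ch ^ 2)
            + 2 * mR ^ 2 * Cf * gamma k ^ 2 * (Cf + lambda k * Ch) + 4 * gamma k * lambda k * Mh).
  { intro k.
    set (gk := gamma k). set (lk := lambda k). set (c := lk / mR).
    assert (Hgk : 0 < gk) by (apply Hg). assert (Hlk : 0 < lk) by (apply Hl).
    assert (Hc0 : 0 <= c) by (unfold c; apply Rmult_le_pos; [lra| left; apply Rinv_0_lt_compat; lra]).
    assert (Hclk : c <= lk).
    { unfold c. apply (Rmult_le_reg_r mR); [lra|]. unfold Rdiv; rewrite Rmult_assoc, Rinv_l; nra. }
    assert (HcmR : c * mR = lk) by (unfold c; field; lra).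
    set (G := Cf + c * Ch).
    assert (HG0 : 0 <= G) by (unfold G; nra).
    set (v := fun i => vadd (gf k i) (vscal c (gh k i))).
    assert (Hv : forall i, (i < m)%nat -> norm (v i) <= G).
    { intros i Hi. destruct (Hit k i Hi) as [Hsf [Hsh _]].
      pose proof (HCf i _ _ Hi (HX k i ltac:(lia)) Hsf). pose proof (HCh _ _ (HX k i ltac:(lia)) Hsh).
      unfold v. eapply Rle_trans; [apply norm_triangle|]. rewrite norm_scal, Rabs_pos_eq by lra.
      unfold G. nra. }
    assert (HS1 : forall i, (i < m)%nat -> norm (vsub (x k (Datatypes.S i)) (x k i)) <= gk * G).
    { intros i Hi. destruct (Hit k i Hi) as [_ [_ Hp]].
      pose proof (proj_dist X _ _ (x k i) HXc Hp (HX k i ltac:(lia))) as H.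
      replace (vsub (vsub (x k i) (vscal (gamma k) (vadd (gf k i) (vscal (lambda k / INR m) (gh k i))))) (x k i))
        with (vscal (- gk) (v i)) in H by (apply vec_ext; intro j; unfold v, vsub, vscal, vadd, gk, c, lk, mR; ring).
      rewrite norm_scal, Rabs_left in H by lra. pose proof (Hv i Hi). nra. }
    assert (HS5 : forall i, (i <= m)%nat -> norm (vsub (x k i) (x k 0%nat)) <= INR i * gk * G).
    { induction i; intros Hi.
      - rewrite norm_zero. simpl; lra.
      - specialize (IHi ltac:(lia)).
        replace (vsub (x k (Datatypes.S i)) (x k 0%nat)) with
          (vadd (vsub (x k (Datatypes.S i)) (x k i)) (vsub (x k i) (x k 0%nat)))
          by (apply vec_ext; intro j; unfold vsub, vadd; ring).
        eapply Rle_trans; [apply norm_triangle|]. pose proof (HS1 i ltac:(lia)). rewrite S_INR. lra. }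
    set (E := fun i => inner (vsub (x k i) xs) (vsub (x k i) xs)).
    set (Q := 2 * gk * Cf * (mR * gk * G) + 2 * gk * c * (2 * Mh) + gk ^ 2 * G ^ 2).
    assert (HE : forall i, (i < m)%nat ->
      E (Datatypes.S i) <= E i - 2 * gk * (fs i (x k 0%nat) - fs i xs) + Q).
    { intros i Hi. destruct (Hit k i Hi) as [Hsf [Hsh Hp]].
      pose proof (proj_nonexp X _ _ xs HXc Hp Hxs) as H.
      replace (vsub (vsub (x k i) (vscal (gamma k) (vadd (gf k i) (vscal (lambda k / INR m) (gh k i))))) xs)
        with (vsub (vsub (x k i) xs) (vscal gk (v i))) in H
        by (apply vec_ext; intro j; unfold v, vsub, vscal, vadd, gk, c, lk, mR; ring).
      rewrite expand_sub in H. fold (E (Datatypes.S i)) in H. fold (E i) in H.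
      unfold v in H at 1. rewrite inner_add_r, inner_scal_r in H.
      rewrite !inner_flip in H.
      pose proof (Hsf xs) as H1. pose proof (Hsh xs) as H2.
      pose proof (HMh _ Hxs) as Ha1. pose proof (HMh _ (HX k i ltac:(lia))) as Ha2.
      pose proof (Rle_abs (h xs)) as Ha3. pose proof (Rle_abs (- h (x k i))) as Ha4.
      rewrite Rabs_Ropp in Ha4.
      assert (Hhh : inner (gh k i) (vsub xs (x k i)) <= 2 * Mh) by lra.
      assert (Hff : fs i (x k i) - fs i xs <= - inner (gf k i) (vsub xs (x k i))) by lra.
      pose proof (Hlip i (x k i) (x k 0%nat) Hi (HX k i ltac:(lia)) (HX k 0%nat ltac:(lia))) as Hli.
      pose proof (HS5 i ltac:(lia)) as H5i.
      assert (INR i <= mR) by (unfold mR; apply le_INR; lia).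
      assert (Hfi : fs i (x k 0%nat) - fs i (x k i) <= Cf * (mR * gk * G)).
      { eapply Rle_trans; [exact Hli|]. apply Rmult_le_compat_l; auto.
        eapply Rle_trans; [exact H5i|]. apply Rmult_le_compat_r; auto.
        apply Rmult_le_compat_r; lra. }
      assert (Hvv : inner (v i) (v i) <= G ^ 2).
      { rewrite <- norm_sq. pose proof (Hv i Hi). pose proof (norm_pos (v i)). nra. }
      assert (2 * gk * (fs i (x k i) - fs i xs) <= 2 * gk * (- inner (gf k i) (vsub xs (x k i))))
        by (apply Rmult_le_compat_l; lra).
      assert (2 * gk * (c * inner (gh k i) (vsub xs (x k i))) <= 2 * gk * (c * (2 * Mh))).
      { apply Rmult_le_compat_l; [lra|]. apply Rmult_le_compat_l; lra. }
      assert (gk ^ 2 * inner (v i) (v i) <= gk ^ 2 * G ^ 2) by (apply Rmult_le_compat_l; nra).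
      assert (2 * gk * (fs i (x k 0%nat) - fs i (x k i)) <= 2 * gk * (Cf * (mR * gk * G)))
        by (apply Rmult_le_compat_l; lra).
      unfold Q. lra. }
    assert (HEs : forall j, (j <= m)%nat ->
      E j <= E 0%nat - 2 * gk * rsum j (fun i => fs i (x k 0%nat) - fs i xs) + INR j * Q).
    { induction j; intros Hj.
      - simpl. lra.
      - specialize (IHj ltac:(lia)). pose proof (HE j ltac:(lia)). rewrite S_INR. simpl rsum. lra. }
    specialize (HEs m (Nat.le_refl m)).
    rewrite rsum_minus in HEs. fold (f (x k 0%nat)) in HEs. fold (f xs) in HEs. rewrite Hfxs in HEs.
    assert (HD0 : E 0%nat = D k) by reflexivity.
    assert (HD1 : E m = D (Datatypes.S k)) by (unfold E, D; rewrite Hnext; reflexivity).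
    rewrite HD0, HD1 in HEs. fold mR in HEs.
    assert (HGle : G <= Cf + lk * Ch) by (unfold G; nra).
    assert (HG2 : G ^ 2 <= 2 * (Cf ^ 2 + lk ^ 2 * Ch ^ 2)).
    { assert (2 * (Cf ^ 2 + c ^ 2 * Ch ^ 2) - G ^ 2 = (Cf - c * Ch) ^ 2) by (unfold G; ring).
      pose proof (pow2_ge_0 (Cf - c * Ch)).
      assert (c ^ 2 * Ch ^ 2 <= lk ^ 2 * Ch ^ 2).
      { apply Rmult_le_compat_r; [nra|]. nra. } lra. }
    assert (mR * Q <= 2 * mR ^ 2 * Cf * gk ^ 2 * (Cf + lk * Ch) + 4 * gk * lk * Mh
                      + 2 * mR * gk ^ 2 * (Cf ^ 2 + lk ^ 2 * Ch ^ 2)).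
    { unfold Q.
      assert (mR * (2 * gk * c * (2 * Mh)) = 4 * gk * lk * Mh) by (rewrite <- HcmR; ring).
      assert (mR * (2 * gk * Cf * (mR * gk * G)) <= 2 * mR ^ 2 * Cf * gk ^ 2 * (Cf + lk * Ch)).
      { replace (mR * (2 * gk * Cf * (mR * gk * G))) with ((2 * mR ^ 2 * Cf * gk ^ 2) * G) by ring.
        apply Rmult_le_compat_l; auto. assert (0 <= mR^2 * gk^2) by nra. nra. }
      assert (mR * (gk ^ 2 * G ^ 2) <= 2 * mR * gk ^ 2 * (Cf ^ 2 + lk ^ 2 * Ch ^ 2)).
      { replace (mR * (gk ^ 2 * G ^ 2)) with ((mR * gk ^ 2) * G ^ 2) by ring.
        replace (2 * mR * gk ^ 2 * (Cf ^ 2 + lk ^ 2 * Ch ^ 2)) with ((mR * gk ^ 2) * (2 * (Cf ^ 2 + lk ^ 2 * Ch ^ 2))) by ring.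
        apply Rmult_le_compat_l; auto. nra. }
      lra. }
    unfold gk, lk in *. lra. }
  set (P := fun k => Rpower (gamma k) (r - 1)).
  assert (Hpr : forall k, Rpower (gamma k) r = P k * gamma k).
  { intro k. unfold P. replace (Rpower (gamma k) r) with (Rpower (gamma k) ((r - 1) + 1)) by (f_equal; ring).
    rewrite Rpower_plus, Rpower_1 by apply Hg. ring. }
  assert (Hpr1 : forall k, Rpower (gamma k) (r + 1) = P k * gamma k ^ 2).
  { intro k. unfold P. replace (r + 1) with ((r - 1) + (1 + 1)) by ring.
    rewrite !Rpower_plus, Rpower_1 by apply Hg. ring. }
  assert (HP0 : forall k, 0 < P k) by (intro; apply rpow_pos).
  assert (Hk2 : forall k, Rpower (gamma k) r * (f (x k 0%nat) - fstar) <=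
     P k / 2 * (D k - D (Datatypes.S k)) +
     (mR * (Rpower (gamma k) (r + 1) * (Cf ^ 2 + lambda k ^ 2 * Ch ^ 2))
      + mR ^ 2 * Cf * (Rpower (gamma k) (r + 1) * (Cf + lambda k * Ch))
      + 2 * Mh * (Rpower (gamma k) r * lambda k))).
  { intro k. rewrite Hpr, Hpr1.
    assert (0 <= P k / 2) by (pose proof (HP0 k); lra).
    pose proof (Rmult_le_compat_l (P k / 2) _ _ H (HK k)) as H2.
    eapply Rle_trans; [| eapply Rle_trans; [exact H2|]]; right; field. }
  assert (Hsum : rsum N (fun k => Rpower (gamma k) r * (f (x k 0%nat) - fstar)) <=
     rsum N (fun k => P k / 2 * (D k - D (Datatypes.S k))) +
     (mR * rsum N (fun k => Rpower (gamma k) (r + 1) * (Cf ^ 2 + lambda k ^ 2 * Ch ^ 2))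
      + mR ^ 2 * Cf * rsum N (fun k => Rpower (gamma k) (r + 1) * (Cf + lambda k * Ch))
      + 2 * Mh * rsum N (fun k => Rpower (gamma k) r * lambda k))).
  { eapply Rle_trans; [apply rsum_le; intros; apply Hk2|].
    rewrite !rsum_plus, !rsum_scal. lra. }
  assert (Htel : rsum N (fun k => P k / 2 * (D k - D (Datatypes.S k))) <= P (N - 1)%nat / 2 * (4 * M ^ 2)).
  { apply telescope; auto.
    - intro k; pose proof (HP0 k); lra.
    - intro k. unfold P. assert (P (Datatypes.S k) >= P k); [|unfold P in *; lra].
      unfold P. apply Rle_ge, rpow_mono; auto. apply Hg. lra.
    - intro k. unfold D. split; [apply inner_pos|].
      rewrite <- norm_sq. pose proof (norm_sub_le (x k 0%nat) xs).
      pose proof (HM _ (HX k 0%nat ltac:(lia))). pose proof (HM _ Hxs).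
      pose proof (norm_pos (vsub (x k 0%nat) xs)). nra. }
  assert (HS : 0 < S) by (apply rsum_pos; auto; intros; apply rpow_pos).
  assert (Hjen : f xbar <= / S * rsum N (fun k => Rpower (gamma k) r * f (x k 0%nat))).
  { apply (jensen f (fun k => Rpower (gamma k) r) (fun k => x k 0%nat)); auto.
    - apply convex_rsum; auto.
    - intro; apply rpow_pos. }
  assert (Hsp : rsum N (fun k => Rpower (gamma k) r * f (x k 0%nat)) =
     rsum N (fun k => Rpower (gamma k) r * (f (x k 0%nat) - fstar)) + fstar * S).
  { unfold S. rewrite <- rsum_scal, <- rsum_plus. apply rsum_ext; intros; ring. }
  rewrite Hsp in Hjen.
  assert (/ S * (rsum N (fun k => Rpower (gamma k) r * (f (x k 0%nat) - fstar)) + fstar * S) - fstar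
          = / S * rsum N (fun k => Rpower (gamma k) r * (f (x k 0%nat) - fstar))) by (field; lra).
  assert (HiS : 0 < / S) by (apply Rinv_0_lt_compat; auto).
  assert (P (N - 1)%nat / 2 * (4 * M ^ 2) = 2 * M ^ 2 * Rpower (gamma (N - 1)%nat) (r - 1)) by (unfold P; field).
  assert (Hfin : rsum N (fun k => Rpower (gamma k) r * (f (x k 0%nat) - fstar)) <=
     mR * rsum N (fun k => Rpower (gamma k) (r + 1) * (Cf ^ 2 + lambda k ^ 2 * Ch ^ 2))
     + mR ^ 2 * Cf * rsum N (fun k => Rpower (gamma k) (r + 1) * (Cf + lambda k * Ch))
     + 2 * Mh * rsum N (fun k => Rpower (gamma k) r * lambda k)
     + 2 * M ^ 2 * Rpower (gamma (N - 1)%nat) (r - 1)) by lra.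
  apply (Rmult_le_compat_l (/ S)) in Hfin; [|lra].
  lra.
Qed.
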